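(* In the standing setup, assume in addition that $A$ is generic (three pairwise distinct double eigenvalues) and that $\det f_0'(x)$ is not identically zero. Then for all $x\in\mathbb R^6$, $$(f_0'(x))^2=p_0(x)I+\sum_{i=1}^3 q_i(x)B_i^{\rm T},$$ where $p_0(x)=\tfrac18\operatorname{tr}(f_0'(x))^2$ and $q_i(x)=\tfrac18\operatorname{tr}\big(B_i^{\rm T}(f_0'(x))^2\big)=\tfrac18\operatorname{tr}\big(f_0'(x)g_i'(x)\big)$, with $g_i=B_i^{\rm T}f_0$.
   Context: Standing setup: $J=\begin{pmatrix}0&I_3\\-I_3&0\end{pmatrix}$ ($6\times6$). $A$ is a fixed real $6\times 6$ skew-Hamiltonian matrix ($A^{\rm T}J=JA$). $H_0$ is a homogeneous cubic polynomial on $\mathbb R^6$ with $A\nabla^2H_0(x)=\nabla^2H_0(x)A^{\rm T}$ for all $x$ ($\nabla^2$ = Hesse matrix), $H_1,H_2$ homogeneous cubic polynomials with $\nabla H_1=A\nabla H_0$, $\nabla H_2=A\nabla H_1$, $f_i=J\nabla H_i$, primes denote Jacobi matrices. Genericity: the characteristic polynomial of $A$ (a square of a cubic) has three pairwise distinct roots $\lambda_1,\lambda_2,\lambda_3$, each a double eigenvalue. $B_i=\alpha_iI+\beta_iA+\gamma_iA^2$ ($i=1,2,3$), where $\alpha_i+\beta_i\lambda+\gamma_i\lambda^2$ is the unique polynomial of degree $\le 2$ equal to $-1$ at $\lambda_i$ and to $1$ at the other two eigenvalues; then $B_i^2=I$ and $B_1+B_2+B_3=I$. *)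

(* Defs.v *)
From HB Require Import structures.
From mathcomp Require Import all_boot all_order all_algebra.
Set Implicit Arguments. Unset Strict Implicit. Unset Printing Implicit Defensive.
Import Order.TTheory GRing.Theory Num.Theory.
Local Open Scope ring_scope.

(* The 6x6 symplectic matrix J = [[0, I_3], [-I_3, 0]]. *)
Definition Jmx (C : ringType) : 'M[C]_6 :=
  \matrix_(i < 6, j < 6)
    if (i < 3)%N && (j == i + 3 :> nat) then 1
    else if (3 <= i)%N && (i == j + 3 :> nat) then -1 else 0.

(* A homogeneous cubic polynomial on C^6 is given by a coefficient tensor c:
   H(x) = sum_{i,j,k} c i j k * x_i x_j x_k  (every homogeneous cubic has
   such a representation).  x is a column vector. *)
Definition cubic (C : ringType) (c : 'I_6 -> 'I_6 -> 'I_6 -> C) (x : 'cV[C]_6) : C :=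
  \sum_(i < 6) \sum_(j < 6) \sum_(k < 6) c i j k * x i 0 * x j 0 * x k 0.

Definition cubic_grad (C : ringType) (c : 'I_6 -> 'I_6 -> 'I_6 -> C) (x : 'cV[C]_6)
  : 'cV[C]_6 :=
  \col_(m < 6) \sum_(j < 6) \sum_(k < 6)
     (c m j k + c j m k + c j k m) * x j 0 * x k 0.

Definition cubic_hess (C : ringType) (c : 'I_6 -> 'I_6 -> 'I_6 -> C) (x : 'cV[C]_6)
  : 'M[C]_6 :=
  \matrix_(m < 6, n < 6) \sum_(k < 6)
     (c m n k + c m k n + c n m k + c k m n + c n k m + c k n m) * x k 0.

(* Jacobi matrix of f_0 = J grad H_0 : f_0'(x) = J * Hess H_0 (x). *)
Definition f0_jac (C : ringType) (c : 'I_6 -> 'I_6 -> 'I_6 -> C) (x : 'cV[C]_6)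
  : 'M[C]_6 := Jmx C *m cubic_hess c x.

(* Main.v *)
Require Import Defs.
From HB Require Import structures.
From mathcomp Require Import all_boot all_order all_algebra.
From mathcomp Require Import ring zify.
Import Order.TTheory GRing.Theory Num.Theory.
Local Open Scope ring_scope.

Section Helpers.
Variable C : numClosedFieldType.

Lemma char_poly_tr n (A : 'M[C]_n) : char_poly A^T = char_poly A.
Proof.
rewrite /char_poly -det_tr; congr (\det _); apply/matrixP => i j.
by rewrite !mxE; case: eqVneq => [->|]; rewrite ?eqxx // eq_sym => /negbTE ->.
Qed.

Lemma horner_mx_tr (A : 'M[C]_6) (p : {poly C}) :
  horner_mx A^T p = (horner_mx A p)^T.
Proof.
elim/poly_ind: p => [|p c IH]; first by rewrite !rmorph0 trmx0.
rewrite !rmorphD !rmorphM /= !horner_mx_X !horner_mx_C IH linearD /= tr_scalar_mx.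
congr (_ + _); rewrite -!mulmxE -trmx_mul; congr (_^T).
by have := comm_mx_horner p (comm_mx_refl A); rewrite /comm_mx => ->.
Qed.

Lemma horner_intertw (T J : 'M[C]_6) (p : {poly C}) :
  T *m J = J *m T^T -> horner_mx T p *m J = J *m (horner_mx T p)^T.
Proof.
move=> hTJ; elim/poly_ind: p => [|p c IH]; first by rewrite !rmorph0 trmx0 mul0mx mulmx0.
rewrite !rmorphD !rmorphM /= !horner_mx_X !horner_mx_C linearD /= tr_scalar_mx.
rewrite mulmxDl mulmxDr mul_scalar_mx mul_mx_scalar; congr (_ + _).
rewrite -mulmxE -mulmxA hTJ mulmxA IH -mulmxA -trmx_mul.
by have := comm_mx_horner p (comm_mx_refl T); rewrite /comm_mx => ->.
Qed.

Lemma horner_eig m (V : 'M[C]_(m,6)) (T : 'M[C]_6) a (p : {poly C}) :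
  V *m T = a *: V -> V *m horner_mx T p = p.[a] *: V.
Proof.
move=> hV; elim/poly_ind: p => [|p c IH]; first by rewrite !rmorph0 mulmx0 horner0 scale0r.
rewrite !rmorphD !rmorphM /= !horner_mx_X !horner_mx_C mulmxDr -mulmxE mulmxA IH.
by rewrite -scalemxAl hV scalerA mul_mx_scalar hornerD hornerMX hornerC scalerDl.
Qed.

Lemma ortho_ker (T J : 'M[C]_6) (p q : {poly C}) m1 m2 (U : 'M[C]_(m1,6)) (W : 'M[C]_(m2,6)) :
  coprimep p q -> T *m J = J *m T^T ->
  (U <= kermxpoly T p)%MS -> (W <= kermxpoly T q)%MS -> U *m J *m W^T = 0.
Proof.
move=> /Bezout_eq1_coprimepP [[u v]] /= huv hTJ /sub_kermxP hU /sub_kermxP hW.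
rewrite [u * p]mulrC in huv.
have -> : U = U *m horner_mx T v *m horner_mx T q.
  have := congr1 (fun r => U *m horner_mx T r) huv.
  rewrite rmorph1 mulmx1 rmorphD /= !rmorphM /= mulmxDr -!mulmxE !mulmxA hU mul0mx add0r.
  by move=> ->.
by rewrite -!mulmxA (mulmxA (horner_mx T q)) horner_intertw // -!mulmxA -trmx_mul hW trmx0 !mulmx0.
Qed.

Lemma even_rank r (O : 'M[C]_r) : O \in unitmx -> O^T = - O -> ~~ odd r.
Proof.
move=> hu hO; apply/negP => hodd.
have : \det O = - \det O.
  by rewrite -{1}det_tr hO -scaleN1r detZ -signr_odd hodd expr1 mulN1r.
move/eqP; rewrite -subr_eq0 opprK -mulr2n mulrn_eq0 /= => /eqP h0.
by move: hu; rewrite unitmxE h0 unitr0.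
Qed.


Lemma exists_base m n (W : 'M[C]_(m,n)) r : \rank W = r ->
  exists V : 'M[C]_(r,n), (V :=: W)%MS.
Proof. by move=> <-; exists (row_base W); exact: eq_row_base. Qed.

Lemma two_neq0 (x : C) : x + x = 0 -> x = 0.
Proof.
by move/eqP; rewrite -mulr2n mulrn_eq0 /= => /eqP.
Qed.

Lemma ord2 (i : 'I_2) : i = ord0 \/ i = lift ord0 ord0.
Proof. by case: i => [[|[|//]] hi]; [left|right]; apply: val_inj. Qed.

Lemma sa_scalar (X J : 'M[C]_6) (V : 'M[C]_(2,6)) :
  (V *m X <= V)%MS -> X *m J = J *m X^T ->
  (V *m J *m V^T) \in unitmx -> (V *m J *m V^T)^T = - (V *m J *m V^T) ->
  exists a, V *m X = a *: V.
Proof.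
move=> /submxP [R hR] hXJ; set O := V *m J *m V^T => hu hO.
have hRO : R *m O = O *m R^T.
  transitivity (V *m (X *m J) *m V^T); first by rewrite /O !mulmxA -hR.
  by rewrite hXJ !mulmxA -(mulmxA (V *m J)) -trmx_mul hR trmx_mul !mulmxA.
clearbody O.
have hOe : forall i j, O j i = - O i j.
  by move=> i j; have := congr1 (fun M : 'M[C]_2 => M i j) hO; rewrite !mxE.
have O00 : O ord0 ord0 = 0 by apply: two_neq0; rewrite {1}hOe addNr.
have O11 : O (lift ord0 ord0) (lift ord0 ord0) = 0 by apply: two_neq0; rewrite {1}hOe addNr.
have O10 := hOe ord0 (lift ord0 ord0).
have w0 : O ord0 (lift ord0 ord0) != 0.
  apply: contraTneq hu => h0; suff -> : O = 0 by rewrite unitmxE det0 unitr0.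
  apply/matrixP => i j; rewrite mxE.
  by case: (ord2 i) => ->; case: (ord2 j) => ->; rewrite ?O00 ?O11 ?O10 ?h0 ?oppr0.
have E i j := congr1 (fun M : 'M[C]_2 => M i j) hRO.
have E00 := E ord0 ord0; have E11 := E (lift ord0 ord0) (lift ord0 ord0).
have E01 := E ord0 (lift ord0 ord0).
rewrite !mxE !big_ord_recl !big_ord0 !mxE O00 O11 O10 in E00 E11 E01.
rewrite !(mulr0, mul0r, addr0, add0r) in E00 E11 E01.
set w := O ord0 (lift ord0 ord0) in w0 E00 E11 E01.
have hb : R ord0 (lift ord0 ord0) = 0.
  have : R ord0 (lift ord0 ord0) * w = 0.
    by apply: two_neq0; rewrite {1}mulrC -E00 mulrN addNr.
  by move/eqP; rewrite mulf_eq0 (negbTE w0) orbF => /eqP.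
have hc : R (lift ord0 ord0) ord0 = 0.
  have : R (lift ord0 ord0) ord0 * w = 0.
    by apply: two_neq0; rewrite {2}E11 mulNr mulrC addrN.
  by move/eqP; rewrite mulf_eq0 (negbTE w0) orbF => /eqP.
have hd : R (lift ord0 ord0) (lift ord0 ord0) = R ord0 ord0.
  by apply: (mulIf w0); rewrite E01 mulrC.
exists (R ord0 ord0); rewrite hR -mul_scalar_mx; congr (_ *m _).
apply/matrixP => i j; rewrite mxE.
by case: (ord2 i) => ->; case: (ord2 j) => ->; rewrite ?hb ?hc ?hd.
Qed.

End Helpers.
Lemma Jtr (C : numClosedFieldType) : (Jmx C)^T = - Jmx C.
Proof.
apply/matrixP => i j; rewrite !mxE.
case: i => [[|[|[|[|[|[|//]]]]]] hi]; case: j => [[|[|[|[|[|[|//]]]]]] hj] /=;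
  by rewrite ?oppr0 ?opprK.
Qed.

Lemma JJ (C : numClosedFieldType) : Jmx C *m Jmx C = - 1%:M.
Proof.
apply/matrixP => i j; rewrite !mxE !big_ord_recl big_ord0 !mxE.
case: i => [[|[|[|[|[|[|//]]]]]] hi]; case: j => [[|[|[|[|[|[|//]]]]]] hj] /=;
  rewrite ?(mul0r, mulr0, add0r, addr0, mulr1, mul1r, mulN1r, oppr0, opprK) //.
Qed.

Lemma hess_sym (C : numClosedFieldType) c (x : 'cV[C]_6) : (cubic_hess c x)^T = cubic_hess c x.
Proof.
apply/matrixP => i j; rewrite !mxE; apply: eq_bigr => k _; congr (_ * _); ring.
Qed.

Lemma tr3 (C : numClosedFieldType) (V0 V1 V2 : 'M[C]_(2,6)) (X : 'M[C]_6) x0 x1 x2 :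
  (col_mx V0 (col_mx V1 V2) : 'M[C]_6) \in unitmx ->
  V0 *m X = x0 *: V0 -> V1 *m X = x1 *: V1 -> V2 *m X = x2 *: V2 ->
  \tr X = (x0 + x1 + x2) *+ 2.
Proof.
move=> hu h0 h1 h2.
pose D : 'M[C]_(2 + (2 + 2)) := block_mx x0%:M 0 0 (block_mx x1%:M 0 0 x2%:M).
have hED : col_mx V0 (col_mx V1 V2) *m X = D *m col_mx V0 (col_mx V1 V2).
  rewrite mul_col_mx mul_col_mx h0 h1 h2 /D mul_block_col mul_block_col.
  by rewrite !mul0mx !addr0 !add0r !mul_scalar_mx.
set E6 := (col_mx V0 (col_mx V1 V2) : 'M[C]_6) in hu.
have -> : X = invmx E6 *m (E6 *m X) by rewrite mulKmx.
have hED' : E6 *m X = (D : 'M[C]_6) *m E6 by exact: hED.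
rewrite hED' mxtrace_mulC -mulmxA mulmxV // mulmx1.
transitivity (@mxtrace _ (2 + (2 + 2)) D); first by [].
by rewrite /D !mxtrace_block !mxtrace_scalar !mulrnDl addrA.
Qed.

Theorem mainTheorem7
  (C : numClosedFieldType)
  (A : 'M[C]_6) (c : 'I_6 -> 'I_6 -> 'I_6 -> C)
  (lam : 'I_3 -> C) (P : 'I_3 -> {poly C})
  (* A and H_0 are real *)
  (hAreal : forall i j, A i j \is Num.real)
  (hcreal : forall i j k, c i j k \is Num.real)
  (* A is skew-Hamiltonian *)
  (hskew : A^T *m Jmx C = Jmx C *m A)
  (* commutation condition on the Hesse matrix of H_0 *)
  (hcomm : forall x : 'cV[C]_6, (forall i, x i 0 \is Num.real) ->
             A *m cubic_hess c x = cubic_hess c x *m A^T)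
  (* genericity: three pairwise distinct double eigenvalues *)
  (hlam : injective lam)
  (hchar : char_poly A = \prod_(i < 3) ('X - (lam i)%:P) ^+ 2)
  (* P i is the polynomial of degree <= 2 equal to -1 at lam i, 1 at the others *)
  (hPsize : forall i, (size (P i) <= 3)%N)
  (hPval : forall i j, (P i).[lam j] = (if i == j then -1 else 1))
  (* det f_0'(x) not identically zero on R^6 *)
  (hdet : exists x : 'cV[C]_6, (forall i, x i 0 \is Num.real) /\
            \det (f0_jac c x) != 0) :
  let B := fun i => horner_mx A (P i) in
  forall x : 'cV[C]_6, (forall i, x i 0 \is Num.real) ->
    let F := f0_jac c x in
    let p0 := 8^-1 * \tr (F *m F) in
    let q := fun i => 8^-1 * \tr ((B i)^T *m (F *m F)) in
    F *m F = p0 *: 1%:M + \sum_(i < 3) q i *: (B i)^T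
    /\ (forall i, q i = 8^-1 * \tr (F *m ((B i)^T *m F))).
Proof.
move=> B x hx F p0 q.
split; last first.
  move=> i; rewrite /q [in RHS]mxtrace_mulC mulmxA; reflexivity.
have hF0 : F = Jmx C *m cubic_hess c x by [].
have hJt : (Jmx C)^T = - Jmx C by apply: Jtr.
have hJJ : Jmx C *m Jmx C = - 1%:M by apply: JJ.
have hSt : (cubic_hess c x)^T = cubic_hess c x by apply: hess_sym.
have hcx := hcomm x hx.
clearbody F.
move: (Jmx C) (cubic_hess c x) hF0 hJt hJJ hSt hcx hskew => J S hF hJt hJJ hSt hcx hskew'.
pose T := A^T.
have hTJ : T *m J = J *m T^T by rewrite /T trmxK hskew'.
have hST : S *m T = T^T *m S by rewrite /T trmxK hcx.
have hFT : F *m T = T *m F.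
  by rewrite hF -mulmxA hST mulmxA -hTJ mulmxA.
have hFJ : F *m J = - (J *m F^T).
  by rewrite hF trmx_mul hSt hJt !mulmxN opprK mulmxA.
have hFFJ : (F *m F) *m J = J *m (F *m F)^T.
  by rewrite -mulmxA hFJ mulmxN mulmxA hFJ mulNmx opprK trmx_mul !mulmxA.
have cTFF : comm_mx T (F *m F).
  by rewrite /comm_mx mulmxA -hFT -!mulmxA hFT.
pose pk (k : 'I_3) : {poly C} := ('X - (lam k)%:P) ^+ 2.
pose G (k : 'I_3) := kermxpoly T (pk k).
have hcop : forall i j : 'I_3, j != i -> coprimep (pk i) (pk j).
  move=> i j hji; rewrite /pk coprimep_expr ?coprimep_expl // coprimep_XsubC root_XsubC (inj_eq hlam).
  exact: hji.
have hcop' : {in predT &, forall i j : 'I_3, j != i -> coprimep (pk i) (pk j)}.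
  by move=> i j _ _; apply: hcop.
have hsum : (\sum_k G k :=: 1%:M)%MS.
  apply: eqmx_trans (eqmx_sym (kermxpoly_prod T hcop')) _.
  apply: kermxpoly_min; apply: mxminpoly_min.
  have -> : \prod_(i | predT i) pk i = char_poly A by rewrite hchar.
  by rewrite /T horner_mx_tr Cayley_Hamilton trmx0.
have hdir : mxdirect (\sum_k G k) := mxdirect_sum_kermx T hcop'.
have hrk : (\sum_k \rank (G k) = 6)%N.
  move/mxdirectP: (hdir) => /= <-. by rewrite hsum mxrank1.
have skew : forall r (V : 'M[C]_(r,6)), (V *m J *m V^T)^T = - (V *m J *m V^T).
  by move=> r V; rewrite !trmx_mul trmxK hJt mulNmx mulmxN mulmxA.
have gram : forall k r (V : 'M[C]_(r,6)), (V :=: G k)%MS -> row_free V ->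
    (V *m J *m V^T) \in unitmx.
  move=> k r V hV hfree; rewrite -row_free_unit; apply: inj_row_free => y hy.
  pose u := y *m V.
  have huk : (u <= G k)%MS by rewrite /u -hV submxMl.
  have huJG : forall j, u *m J *m (G j)^T = 0.
    move=> j; case: (eqVneq j k) => [->|hjk].
      have /submxP [Z hZ] : (G k <= V)%MS by rewrite hV.
      rewrite hZ trmx_mul !mulmxA /u; rewrite !mulmxA in hy; by rewrite hy mul0mx.
    by apply: (ortho_ker C T J (pk k) (pk j)) => //; apply: hcop.
  have huJ : u *m J = 0.
    have /sub_sumsmxP [w hw] : (1%:M <= \sum_j G j)%MS by rewrite hsum.
    rewrite -[u *m J]mulmx1 -trmx1 hw linear_sum /= mulmx_sumr big1 // => j _.
    by rewrite trmx_mul mulmxA huJG mul0mx.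
  have hu0 : u = 0.
    have := congr1 (mulmx^~ J) huJ; rewrite mul0mx -mulmxA hJJ mulmxN mulmx1.
    by move/eqP; rewrite oppr_eq0 => /eqP.
  by apply: (row_free_inj hfree); rewrite mul0mx.
have hev : forall k, ~~ odd (\rank (G k)).
  move=> k; apply: (even_rank C _ (row_base (G k) *m J *m (row_base (G k))^T)).
    by apply: (gram k); [exact: eq_row_base | exact: row_base_free].
  exact: skew.
have hpos : forall k, (0 < \rank (G k))%N.
  move=> k.
  have : eigenvalue T (lam k).
    rewrite eigenvalue_root_char /T char_poly_tr hchar /root horner_prod (bigD1 k) //=.
    by rewrite !hornerE subrr expr0n /= mul0r.
  move/eigenvalueP => [v hv vn0].
  have hvG : (v <= G k)%MS.
    apply/sub_kermxP; rewrite /pk rmorphXn rmorphB /= horner_mx_X horner_mx_C expr2.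
    have hv' : v *m (T - (lam k)%:M) = 0 by rewrite mulmxBr mul_mx_scalar hv subrr.
    by rewrite -mulmxE mulmxA hv' mul0mx.
  have := mxrankS hvG; apply: leq_trans; rewrite lt0n mxrank_eq0 //.
have ord3 : forall k : 'I_3, k = ord0 \/ k = lift ord0 ord0 \/ k = lift ord0 (lift ord0 ord0).
  by case=> [[|[|[|//]]] hk]; [left|right;left|right;right]; apply: val_inj.
have hr2 : forall k, \rank (G k) = 2%N.
  move: hrk; rewrite !big_ord_recl big_ord0 addn0.
  have e k : \rank (G k) = ((\rank (G k))./2).*2.
    by rewrite -{1}(odd_double_half (\rank (G k))) (negbTE (hev k)).
  have p0' := hpos ord0; have p1 := hpos (lift ord0 ord0);
  have p2 := hpos (lift ord0 (lift ord0 ord0)).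
  rewrite e in p0'; rewrite e in p1; rewrite e in p2.
  rewrite (e ord0) (e (lift ord0 ord0)) (e (lift ord0 (lift ord0 ord0))) => hs k.
  rewrite e; case: (ord3 k) => [->|[->|->]]; rewrite -!muln2 in hs p0' p1 p2 *; lia.
have blk : forall k (V : 'M[C]_(2,6)), (V :=: G k)%MS ->
    V *m T = lam k *: V /\ exists ck, V *m (F *m F) = ck *: V.
  move=> k V hV.
  have hfree : row_free V by rewrite /row_free hV hr2.
  have hg := gram k 2 V hV hfree.
  have hs := skew 2 V.
  have hVG : (V <= G k)%MS by rewrite hV.
  have hGV : (G k <= V)%MS by rewrite hV.
  have stab : forall X, comm_mx T X -> (V *m X <= V)%MS.
    move=> X hX; apply: submx_trans (submxMr X hVG) _; apply: submx_trans _ hGV.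
    exact: comm_mx_stable_kermxpoly.
  split; last exact: (sa_scalar C (F *m F) J V (stab _ cTFF) hFFJ hg hs).
  have [a ha] := sa_scalar C T J V (stab T (comm_mx_refl T)) hTJ hg hs.
  have : V *m horner_mx T (pk k) = 0 by apply/sub_kermxP.
  rewrite (horner_eig C _ V T a (pk k) ha) /pk !hornerE => /eqP.
  rewrite scaler_eq0 => /orP [|/eqP V0].
    by rewrite sqrf_eq0 subr_eq0 => /eqP <-.
  by move: hfree; rewrite /row_free V0 mxrank0.
have [V0 hV0] := exists_base C _ _ _ _ (hr2 (ord0 : 'I_3)).
have [V1 hV1] := exists_base C _ _ _ _ (hr2 (lift ord0 ord0 : 'I_3)).
have [V2 hV2] := exists_base C _ _ _ _ (hr2 (lift ord0 (lift ord0 ord0) : 'I_3)).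
have [hT0 [c0 hc0]] := blk _ V0 hV0.
have [hT1 [c1 hc1]] := blk _ V1 hV1.
have [hT2 [c2 hc2]] := blk _ V2 hV2.
have hEu' : row_full (col_mx V0 (col_mx V1 V2)).
  rewrite -sub1mx.
  apply: submx_trans (_ : (1%:M <= \sum_k G k)%MS) _; first by rewrite hsum.
  apply/sumsmx_subP => k _; case: (ord3 k) => [->|[->|->]].
  - by apply: submx_trans (_ : (G _ <= V0)%MS) _; [rewrite hV0 | rewrite -addsmxE addsmxSl].
  - apply: submx_trans (_ : (G _ <= V1)%MS) _; first by rewrite hV1.
    rewrite -addsmxE; apply: submx_trans (addsmxSr V0 _); rewrite -addsmxE; exact: addsmxSl.
  - apply: submx_trans (_ : (G _ <= V2)%MS) _; first by rewrite hV2.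
    rewrite -addsmxE; apply: submx_trans (addsmxSr V0 _); rewrite -addsmxE; exact: addsmxSr.
have hEu : (col_mx V0 (col_mx V1 V2) : 'M[C]_6) \in unitmx.
  by rewrite -row_full_unit; exact: hEu'.
have key : forall X Y : 'M[C]_6, V0 *m X = V0 *m Y -> V1 *m X = V1 *m Y ->
    V2 *m X = V2 *m Y -> X = Y.
  move=> X Y h0 h1 h2.
  have hE : col_mx V0 (col_mx V1 V2) *m X = col_mx V0 (col_mx V1 V2) *m Y.
    by rewrite !mul_col_mx h0 h1 h2.
  rewrite -[X](mulKmx hEu) -[Y](mulKmx hEu); congr (_ *m _); exact: hE.
have hBF : forall k (V : 'M[C]_(2,6)) ck, V *m T = lam k *: V -> V *m (F *m F) = ck *: V ->
    forall i, V *m ((B i)^T *m (F *m F)) = ((P i).[lam k] * ck) *: V.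
  move=> k V ck hT hc i.
  by rewrite mulmxA /B -horner_mx_tr (horner_eig C _ V T (lam k) _ hT) -scalemxAl hc scalerA.
have hp0 : p0 = 8^-1 * ((c0 + c1 + c2) *+ 2).
  by rewrite /p0 (tr3 C V0 V1 V2 _ _ _ _ hEu hc0 hc1 hc2).
have hq : forall i, q i = 8^-1 * (((P i).[lam (ord0 : 'I_3)] * c0 + (P i).[lam (lift ord0 ord0 : 'I_3)] * c1
    + (P i).[lam (lift ord0 (lift ord0 ord0) : 'I_3)] * c2) *+ 2).
  by move=> i; rewrite /q (tr3 C V0 V1 V2 _ _ _ _ hEu (hBF _ _ _ hT0 hc0 i) (hBF _ _ _ hT1 hc1 i) (hBF _ _ _ hT2 hc2 i)).
have fin : forall k (V : 'M[C]_(2,6)) ck, V *m T = lam k *: V -> V *m (F *m F) = ck *: V ->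
    ck = p0 + \sum_(i < 3) q i * (P i).[lam k] ->
    V *m (F *m F) = V *m (p0 *: 1%:M + \sum_(i < 3) q i *: (B i)^T).
  move=> k V ck hT hc hck.
  rewrite mulmxDr -scalemxAr mulmx1 mulmx_sumr.
  under eq_bigr => i _ do rewrite -scalemxAr /B -horner_mx_tr (horner_eig C _ V T (lam k) _ hT) scalerA.
  by rewrite -scaler_suml -scalerDl hc hck.
have n01 : ((ord0 : 'I_3) == (lift ord0 ord0 : 'I_3)) = false by [].
have n02 : ((ord0 : 'I_3) == (lift ord0 (lift ord0 ord0) : 'I_3)) = false by [].
have n10 : ((lift ord0 ord0 : 'I_3) == (ord0 : 'I_3)) = false by [].
have n12 : ((lift ord0 ord0 : 'I_3) == (lift ord0 (lift ord0 ord0) : 'I_3)) = false by [].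
have n20 : ((lift ord0 (lift ord0 ord0) : 'I_3) == (ord0 : 'I_3)) = false by [].
have n21 : ((lift ord0 (lift ord0 ord0) : 'I_3) == (lift ord0 ord0 : 'I_3)) = false by [].
apply: key.
- apply: (fin _ _ _ hT0 hc0).
  rewrite hp0 !big_ord_recl big_ord0 !hq !hPval !eqxx ?n01 ?n02 ?n10 ?n12 ?n20 ?n21.
  by field.
- apply: (fin _ _ _ hT1 hc1).
  rewrite hp0 !big_ord_recl big_ord0 !hq !hPval !eqxx ?n01 ?n02 ?n10 ?n12 ?n20 ?n21.
  by field.
- apply: (fin _ _ _ hT2 hc2).
  rewrite hp0 !big_ord_recl big_ord0 !hq !hPval !eqxx ?n01 ?n02 ?n10 ?n12 ?n20 ?n21.
  by field.
Qed.
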